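(* For every basic relation $r$ of Allen's interval algebra, $\{r\}$ supports crisp $r$-constraints.
   Context: Allen's interval algebra has domain $\mathbb{I}=\{[a,b] : a,b\in\mathbb{Q},\ a<b\}$; for $I=[a,b]$ write $I^-=a$, $I^+=b$. Basic relations: $x\,\mathsf{p}\,y$ iff $x^+<y^-$; $x\,\mathsf{m}\,y$ iff $x^+=y^-$; $x\,\mathsf{o}\,y$ iff $x^-<y^-<x^+<y^+$; $x\,\mathsf{d}\,y$ iff $y^-<x^-$ and $x^+<y^+$; $x\,\mathsf{s}\,y$ iff $x^-=y^-$ and $x^+<y^+$; $x\,\mathsf{f}\,y$ iff $x^+=y^+$ and $y^-<x^-$; $x\equiv y$ iff $x=y$; inverses $\mathsf{ri}$ with $x\,\mathsf{ri}\,y$ iff $y\,\mathsf{r}\,x$ (13 relations in total). A language $\Gamma$ supports crisp $r$-constraints if for every $k\in\mathbb{N}$ one can construct a CSP instance $\mathcal{I}_r$ over $\Gamma$ (variables and binary constraints with relations from $\Gamma$) with two distinguished variables $x,y$ such that for every set $X$ of at most $k$ constraints of $\mathcal{I}_r$, the set $\{(\varphi(x),\varphi(y)) : \varphi$ is an assignment of intervals satisfying $\mathcal{I}_r$ with the constraints of $X$ removed$\}$ equals $r$. *)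

(* Defs.v *)
From HB Require Import structures.
From mathcomp Require Import all_boot all_order all_algebra.
From Stdlib Require Import List.
Set Implicit Arguments. Unset Strict Implicit. Unset Printing Implicit Defensive.
Import Order.TTheory GRing.Theory Num.Theory.
Local Open Scope ring_scope.

Record interval := Itv { lo : rat; hi : rat; lo_lt_hi : lo < hi }.

Definition irel := interval -> interval -> Prop.

Inductive allen :=
| A_p | A_m | A_o | A_d | A_s | A_f | A_eq
| A_pi | A_mi | A_oi | A_di | A_si | A_fi.

Definition rel_p : irel := fun x y => hi x < lo y.
Definition rel_m : irel := fun x y => hi x = lo y.
Definition rel_o : irel := fun x y => lo x < lo y /\ lo y < hi x /\ hi x < hi y.
Definition rel_d : irel := fun x y => lo y < lo x /\ hi x < hi y.
Definition rel_s : irel := fun x y => lo x = lo y /\ hi x < hi y.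
Definition rel_f : irel := fun x y => hi x = hi y /\ lo y < lo x.
Definition rel_eq : irel := fun x y => x = y.
Definition inv (R : irel) : irel := fun x y => R y x.

Definition allen_rel (a : allen) : irel :=
  match a with
  | A_p => rel_p | A_m => rel_m | A_o => rel_o | A_d => rel_d
  | A_s => rel_s | A_f => rel_f | A_eq => rel_eq
  | A_pi => inv rel_p | A_mi => inv rel_m | A_oi => inv rel_o
  | A_di => inv rel_d | A_si => inv rel_s | A_fi => inv rel_f
  end.

Definition constraint := (irel * nat * nat)%type.

(* A CSP instance is a finite set (list) of constraints; its variables are those
   occurring in it. A language is a set of binary relations. *)
Definition instance_over (Gamma : irel -> Prop) (I : list constraint) : Prop :=
  forall c, In c I -> Gamma c.1.1.

(* [phi] satisfies the instance [I] with the constraints of [X] removed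
   (set semantics: every constraint of I not belonging to X holds). *)
Definition sat_without (I X : list constraint) (phi : nat -> interval) : Prop :=
  forall R u v, In (R, u, v) I -> ~ In (R, u, v) X -> R (phi u) (phi v).

Definition supports_crisp (Gamma : irel -> Prop) (r : irel) : Prop :=
  forall k : nat, exists (I : list constraint) (x y : nat),
    instance_over Gamma I /\
    forall X : list constraint, incl X I -> (length X <= k)%coq_nat ->
      forall a b : interval,
        (exists phi : nat -> interval, sat_without I X phi /\ phi x = a /\ phi y = b)
        <-> r a b.

(* Main.v *)
Require Import Defs.
From mathcomp Require Import all_boot all_order all_algebra.
From Stdlib Require Import List.
From mathcomp Require Import zify ring lra.
Import Order.TTheory GRing.Theory Num.Theory.

Lemma In_mem (l : list nat) i : In i l -> i \in l.
Proof.
elim: l => //= a l IH [->|/IH H]; by rewrite seq.in_cons ?eqxx ?H ?orbT.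
Qed.

Lemma pigeon (l : list nat) k : (length l <= k)%coq_nat ->
  exists i, (i < k.+1)%N /\ ~ In i l.
Proof.
move=> Hl.
have Hsz : size l = length l by elim: l {Hl} => //= a l ->.
have : ~~ all (fun i => i \in l) (iota 0 k.+1).
  apply/negP => /allP Hsub.
  have := uniq_leq_size (iota_uniq 0 k.+1) Hsub.
  rewrite size_iota Hsz. lia.
case/allPn => i; rewrite mem_iota add0n => /andP[_ Hi] Hni.
exists i; split => // /In_mem H; by rewrite H in Hni.
Qed.

Definition gidx (p : nat * nat) : nat := ((maxn p.1 p.2) - 2)./2.
Definition gidx' (c : constraint) : nat := gidx (c.1.2, c.2).

Lemma frame (R r : irel) (G : nat -> list (nat * nat)) (x y : nat) :
  (forall i p, In p (G i) -> gidx p = i) ->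
  (forall phi i, (forall p, In p (G i) -> R (phi p.1) (phi p.2)) -> r (phi x) (phi y)) ->
  (forall a b, r a b -> exists phi : nat -> Defs.interval, phi x = a /\ phi y = b /\
      forall i p, In p (G i) -> R (phi p.1) (phi p.2)) ->
  supports_crisp (fun R' => R' = R) r.
Proof.
move=> Hidx Hs Hc k.
pose E := flat_map G (List.seq 0 k.+1).
exists (List.map (fun p => (R, p.1, p.2)) E), x, y; split.
  by move=> c /in_map_iff [p [<- _]].
move=> X HX Hk a b; split.
  case=> phi [Hsat [<- <-]].
  have [i [Hi Hni]] := pigeon (List.map gidx' X) k ltac:(rewrite length_map; lia).
  apply: (Hs phi i) => p Hp; apply: Hsat.
    apply/in_map_iff; exists p; split => //.
    apply/in_flat_map; exists i; split => //; apply/in_seq; lia.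
  move=> HX'; apply: Hni; apply/in_map_iff; exists (R, p.1, p.2); split => //.
  by rewrite /gidx' /= -(Hidx i p Hp); case: p {Hp HX'}.
move=> Hr; have [phi [Hx [Hy Hall]]] := Hc a b Hr.
exists phi; split => //.
move=> R' u v /in_map_iff [p [[<- <- <-] HpE] _].
move/in_flat_map: HpE => [i [_ Hp]]; exact: Hall Hp.
Qed.

Definition cv (i : nat) : nat := (i.*2).+2.
Definition dv (i : nat) : nat := (i.*2).+3.

Lemma gidx_c i : ((i.*2).+2 - 2)./2 = i.
Proof. by rewrite !subSS subn0 doubleK. Qed.
Lemma gidx_d i : ((i.*2).+3 - 2)./2 = i.
Proof. by rewrite !subSS subn0 /= uphalf_double. Qed.

Lemma gidx0c i : gidx (0, cv i) = i. Proof. by rewrite /gidx max0n gidx_c. Qed.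
Lemma gidxc0 i : gidx (cv i, 0) = i. Proof. by rewrite /gidx maxn0 gidx_c. Qed.
Lemma gidx1c i : gidx (1, cv i) = i.
Proof. rewrite /gidx. have -> : maxn 1 (cv i) = cv i by rewrite /cv; lia. exact: gidx_c. Qed.
Lemma gidxc1 i : gidx (cv i, 1) = i.
Proof. rewrite /gidx. have -> : maxn (cv i) 1 = cv i by rewrite /cv; lia. exact: gidx_c. Qed.
Lemma gidx0d i : gidx (0, dv i) = i. Proof. by rewrite /gidx max0n gidx_d. Qed.
Lemma gidxd0 i : gidx (dv i, 0) = i. Proof. by rewrite /gidx maxn0 gidx_d. Qed.
Lemma gidx1d i : gidx (1, dv i) = i.
Proof. rewrite /gidx. have -> : maxn 1 (dv i) = dv i by rewrite /dv; lia. exact: gidx_d. Qed.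
Lemma gidxd1 i : gidx (dv i, 1) = i.
Proof. rewrite /gidx. have -> : maxn (dv i) 1 = dv i by rewrite /dv; lia. exact: gidx_d. Qed.
Lemma gidxcd i : gidx (cv i, dv i) = i.
Proof. rewrite /gidx. have -> : maxn (cv i) (dv i) = dv i by rewrite /cv /dv; lia. exact: gidx_d. Qed.
Lemma gidxdc i : gidx (dv i, cv i) = i.
Proof. rewrite /gidx. have -> : maxn (dv i) (cv i) = dv i by rewrite /cv /dv; lia. exact: gidx_d. Qed.

Definition mkphi (a b c d : Defs.interval) (n : nat) : Defs.interval :=
  if n == 0 then a else if n == 1 then b else if odd n then d else c.

Lemma mk0 a b c d : mkphi a b c d 0 = a. Proof. by []. Qed.
Lemma mk1 a b c d : mkphi a b c d 1 = b. Proof. by []. Qed.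
Lemma mkc a b c d i : mkphi a b c d (cv i) = c.
Proof. by rewrite /mkphi /cv /= odd_double. Qed.
Lemma mkd a b c d i : mkphi a b c d (dv i) = d.
Proof. by rewrite /mkphi /dv /= odd_double. Qed.

Definition swp (p : nat * nat) := (p.2, p.1).

Lemma frame_inv (R : irel) (G : nat -> list (nat * nat)) :
  (forall i p, In p (G i) -> gidx p = i) ->
  (forall phi i, (forall p, In p (G i) -> R (phi p.1) (phi p.2)) -> R (phi 0) (phi 1)) ->
  (forall a b, R a b -> exists phi : nat -> Defs.interval, phi 0 = a /\ phi 1 = b /\
      forall i p, In p (G i) -> R (phi p.1) (phi p.2)) ->
  supports_crisp (fun R' => R' = Defs.inv R) (Defs.inv R).
Proof.
move=> Hidx Hs Hc.
apply: (@frame (Defs.inv R) (Defs.inv R) (fun i => List.map swp (G i)) 1 0).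
- move=> i p /in_map_iff [q [<- Hq]]. rewrite -(Hidx i q Hq) /gidx /swp /=.
  by rewrite maxnC.
- move=> phi i H; apply: (Hs phi i) => p Hp.
  exact: (H (swp p) (in_map swp _ _ Hp)).
- move=> a b Hab; have [phi [H0 [H1 H]]] := Hc b a Hab.
  exists phi; split => //; split => //.
  move=> i p /in_map_iff [q [<- Hq]]; exact: H Hq.
Qed.

Definition gadget_ok (R : irel) (G : nat -> list (nat * nat)) :=
  (forall i p, In p (G i) -> gidx p = i) /\
  (forall phi i, (forall p, In p (G i) -> R (phi p.1) (phi p.2)) -> R (phi 0%N) (phi 1%N)) /\
  (forall a b, R a b -> exists phi : nat -> Defs.interval, phi 0%N = a /\ phi 1%N = b /\
      forall i p, In p (G i) -> R (phi p.1) (phi p.2)).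

Local Open Scope ring_scope.

Definition Gp (i : nat) : list (nat * nat) := [:: (0%N, cv i); (cv i, 1%N)].

Lemma crisp_p : gadget_ok rel_p Gp.
Proof.
split; [|split].
- move=> i p /= [<-|[<-|[]]]; [exact: gidx0c | exact: gidxc1].
- move=> phi i H.
  have h1 := H (0%N, cv i) (or_introl erefl).
  have h2 := H (cv i, 1%N) (or_intror (or_introl erefl)).
  move: h1 h2; rewrite /rel_p /= => h1 h2.
  have := lo_lt_hi (phi (cv i)); lra.
- move=> a b; rewrite /rel_p => Hab.
  have Hc : hi a + (lo b - hi a) / 3%:R < hi a + 2%:R * (lo b - hi a) / 3%:R by lra.
  exists (mkphi a b (Itv Hc) a); split => //; split => //.
  move=> i p /= [<-|[<-|[]]]; rewrite /= ?mk0 ?mk1 ?mkc /rel_p /=; lra.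
Qed.

Ltac dconj := repeat match goal with H : _ /\ _ |- _ => destruct H end.

Lemma crisp_eq : gadget_ok rel_eq Gp.
Proof.
split; [|split].
- move=> i p /= [<-|[<-|[]]]; [exact: gidx0c | exact: gidxc1].
- move=> phi i H.
  have h1 := H (0%N, cv i) (or_introl erefl).
  have h2 := H (cv i, 1%N) (or_intror (or_introl erefl)).
  move: h1 h2; rewrite /rel_eq /= => -> ->. by [].
- move=> a b; rewrite /rel_eq => <-.
  exists (mkphi a a a a); split => //; split => //.
  move=> i p /= [<-|[<-|[]]]; by rewrite /= ?mk0 ?mk1 ?mkc /rel_eq.
Qed.

Lemma crisp_d : gadget_ok rel_d Gp.
Proof.
split; [|split].
- move=> i p /= [<-|[<-|[]]]; [exact: gidx0c | exact: gidxc1].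
- move=> phi i H.
  have h1 := H (0%N, cv i) (or_introl erefl).
  have h2 := H (cv i, 1%N) (or_intror (or_introl erefl)).
  move: h1 h2; rewrite /rel_d /= => h1 h2; dconj.
  have := lo_lt_hi (phi (cv i)); split; lra.
- move=> a b; rewrite /rel_d => Hab; dconj.
  have := lo_lt_hi a; have := lo_lt_hi b => ha hb.
  have Hc : (lo a + lo b) / 2%:R < (hi a + hi b) / 2%:R by lra.
  exists (mkphi a b (Itv Hc) a); split => //; split => //.
  move=> i p /= [<-|[<-|[]]]; rewrite /= ?mk0 ?mk1 ?mkc /rel_d /=; split; lra.
Qed.

Lemma crisp_s : gadget_ok rel_s Gp.
Proof.
split; [|split].
- move=> i p /= [<-|[<-|[]]]; [exact: gidx0c | exact: gidxc1].
- move=> phi i H.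
  have h1 := H (0%N, cv i) (or_introl erefl).
  have h2 := H (cv i, 1%N) (or_intror (or_introl erefl)).
  move: h1 h2; rewrite /rel_s /= => h1 h2; dconj.
  have := lo_lt_hi (phi (cv i)); split; lra.
- move=> a b; rewrite /rel_s => Hab; dconj.
  have := lo_lt_hi a; have := lo_lt_hi b => ha hb.
  have Hc : lo a < (hi a + hi b) / 2%:R by lra.
  exists (mkphi a b (Itv Hc) a); split => //; split => //.
  move=> i p /= [<-|[<-|[]]]; rewrite /= ?mk0 ?mk1 ?mkc /rel_s /=; split; lra.
Qed.

Lemma crisp_f : gadget_ok rel_f Gp.
Proof.
split; [|split].
- move=> i p /= [<-|[<-|[]]]; [exact: gidx0c | exact: gidxc1].
- move=> phi i H.
  have h1 := H (0%N, cv i) (or_introl erefl).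
  have h2 := H (cv i, 1%N) (or_intror (or_introl erefl)).
  move: h1 h2; rewrite /rel_f /= => h1 h2; dconj.
  have := lo_lt_hi (phi (cv i)); split; lra.
- move=> a b; rewrite /rel_f => Hab; dconj.
  have := lo_lt_hi a; have := lo_lt_hi b => ha hb.
  have Hc : (lo a + lo b) / 2%:R < hi a by lra.
  exists (mkphi a b (Itv Hc) a); split => //; split => //.
  move=> i p /= [<-|[<-|[]]]; rewrite /= ?mk0 ?mk1 ?mkc /rel_f /=; split; lra.
Qed.

Definition Gm (i : nat) : list (nat * nat) := [:: (0%N, dv i); (cv i, dv i); (cv i, 1%N)].

Lemma crisp_m : gadget_ok rel_m Gm.
Proof.
split; [|split].
- move=> i p /= [<-|[<-|[<-|[]]]]; [exact: gidx0d | exact: gidxcd | exact: gidxc1].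
- move=> phi i H.
  have h1 := H (0%N, dv i) (or_introl erefl).
  have h2 := H (cv i, dv i) (or_intror (or_introl erefl)).
  have h3 := H (cv i, 1%N) (or_intror (or_intror (or_introl erefl))).
  move: h1 h2 h3; rewrite /rel_m /= => h1 h2 h3; lra.
- move=> a b; rewrite /rel_m => Hab.
  have Hc : hi a - 1 < hi a by lra.
  have Hd : hi a < hi a + 1 by lra.
  exists (mkphi a b (Itv Hc) (Itv Hd)); split => //; split => //.
  move=> i p /= [<-|[<-|[<-|[]]]]; rewrite /= ?mk0 ?mk1 ?mkc ?mkd /rel_m /=; lra.
Qed.

Definition Go (i : nat) : list (nat * nat) :=
  [:: (0%N, cv i); (cv i, 1%N); (0%N, dv i); (1%N, dv i)].

Lemma crisp_o : gadget_ok rel_o Go.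
Proof.
split; [|split].
- move=> i p /= [<-|[<-|[<-|[<-|[]]]]];
    [exact: gidx0c | exact: gidxc1 | exact: gidx0d | exact: gidx1d].
- move=> phi i H.
  have h1 := H (0%N, cv i) (or_introl erefl).
  have h2 := H (cv i, 1%N) (or_intror (or_introl erefl)).
  have h3 := H (0%N, dv i) (or_intror (or_intror (or_introl erefl))).
  have h4 := H (1%N, dv i) (or_intror (or_intror (or_intror (or_introl erefl)))).
  move: h1 h2 h3 h4; rewrite /rel_o /= => h1 h2 h3 h4; dconj.
  split; [lra|split; lra].
- move=> a b; rewrite /rel_o => Hab; dconj.
  have := lo_lt_hi a; have := lo_lt_hi b => ha hb.
  have Hc : (lo a + lo b) / 2%:R < (hi a + hi b) / 2%:R by lra.
  have Hd : (lo b + hi a) / 2%:R < hi b + 1 by lra.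
  exists (mkphi a b (Itv Hc) (Itv Hd)); split => //; split => //.
  move=> i p /= [<-|[<-|[<-|[<-|[]]]]]; rewrite /= ?mk0 ?mk1 ?mkc ?mkd /rel_o /=;
    (split; [lra|split; lra]).
Qed.


Theorem mainTheorem8 :
  forall a : allen, supports_crisp (fun R => R = allen_rel a) (allen_rel a).
Proof.
case=> /=.
- by case: crisp_p => [h1 [h2 h3]]; exact: (@frame _ _ _ 0 1 h1 h2 h3).
- by case: crisp_m => [h1 [h2 h3]]; exact: (@frame _ _ _ 0 1 h1 h2 h3).
- by case: crisp_o => [h1 [h2 h3]]; exact: (@frame _ _ _ 0 1 h1 h2 h3).
- by case: crisp_d => [h1 [h2 h3]]; exact: (@frame _ _ _ 0 1 h1 h2 h3).
- by case: crisp_s => [h1 [h2 h3]]; exact: (@frame _ _ _ 0 1 h1 h2 h3).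
- by case: crisp_f => [h1 [h2 h3]]; exact: (@frame _ _ _ 0 1 h1 h2 h3).
- by case: crisp_eq => [h1 [h2 h3]]; exact: (@frame _ _ _ 0 1 h1 h2 h3).
- by case: crisp_p => [h1 [h2 h3]]; exact: (frame_inv _ _ h1 h2 h3).
- by case: crisp_m => [h1 [h2 h3]]; exact: (frame_inv _ _ h1 h2 h3).
- by case: crisp_o => [h1 [h2 h3]]; exact: (frame_inv _ _ h1 h2 h3).
- by case: crisp_d => [h1 [h2 h3]]; exact: (frame_inv _ _ h1 h2 h3).
- by case: crisp_s => [h1 [h2 h3]]; exact: (frame_inv _ _ h1 h2 h3).
- by case: crisp_f => [h1 [h2 h3]]; exact: (frame_inv _ _ h1 h2 h3).
Qed.
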